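(* Let $\Omega,\Omega_1$ be prime ideals of $\mathcal S$ with tautological highest weights $\lambda=\lambda_\Omega$ and $\lambda_1=\lambda_{\Omega_1}$. (1) If $\Omega_1=v.\Omega$ with $v\in W^\lambda$, then $B_{\lambda_1}=vB_\lambda$. (2) If in addition $u\in W^{\lambda_1}$, then $uv\in W^\lambda$.
   Context: $F$ is an algebraically closed field of characteristic zero; $\mathfrak g$ is a semisimple Lie algebra over $F$ with Cartan subalgebra $\mathfrak h$, root system $R$, positive system $R^+$, Weyl group $W$, $\rho=\frac12\sum_{\alpha\in R^+}\alpha$, dot action $w.\xi=w(\xi+\rho)-\rho$; $H_\alpha$ is the coroot of $\alpha$. $\mathcal S=S(\mathfrak h)$ is identified with polynomial functions on $\mathfrak h^*$, with $(w.f)(\xi)=f(w^{-1}.\xi)$ and $w.\Omega=\{w.f:f\in\Omega\}$. For a prime $\Omega$, $\mathbb F$ is the fraction field of $\mathcal S/\Omega$ and $\lambda_\Omega$ the $\mathbb F$-linear extension of $\mathfrak h\hookrightarrow\mathcal S\to\mathcal S/\Omega\hookrightarrow\mathbb F$. For $\lambda=\lambda_\Omega$: $R_\lambda=\{\alpha\in R: H_\alpha-n\in\Omega\text{ for some }n\in\mathbb Z\}$, $R^+_\lambda=R^+\cap R_\lambda$, $B_\lambda$ the simple roots of $R_\lambda$ in $R^+_\lambda$, $W^\lambda=\{w\in W:w(B_\lambda)\subseteq R^+\}$. *)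

(* Defs.v *)
From mathcomp Require Import all_boot all_algebra.
From mathcomp Require Import mpoly.
Set Implicit Arguments. Unset Strict Implicit. Unset Printing Implicit Defensive.
Import GRing.Theory.
Local Open Scope ring_scope.

(* h^* and h are both modelled as F^r (column vectors) in dual coordinates;
   the pairing xi(H) is [pair xi H]. *)
Definition pair (F : fieldType) (r : nat) (x h : 'cV[F]_r) : F :=
  \sum_(i < r) x i 0 * h i 0.

Definition refl (F : fieldType) (r : nat) (a ca : 'cV[F]_r) : 'M[F]_r :=
  1%:M - a *m ca^T.

(* Root system of a semisimple Lie algebra: a reduced crystallographic root
   system R in h^* = F^r spanning h^*, with coroot map cor : alpha |-> H_alpha. *)
Definition root_system (F : fieldType) (r : nat) (R : seq 'cV[F]_r)
    (cor : 'cV[F]_r -> 'cV[F]_r) : Prop :=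
  [/\ uniq R /\ 0 \notin R,
      (forall a, a \in R -> pair a (cor a) = 2%:R),
      (forall a b, a \in R -> b \in R -> refl a (cor a) *m b \in R),
      (forall a b, a \in R -> b \in R -> exists n : int, pair b (cor a) = n%:~R) /\
      (forall a (c : F), a \in R -> c *: a \in R -> c = 1 \/ c = -1)
    & (forall x : 'cV[F]_r, exists c : 'cV[F]_r -> F, x = \sum_(a <- R) c a *: a)].

Definition positive_system (F : fieldType) (r : nat) (R P : seq 'cV[F]_r) : Prop :=
  uniq P /\
  exists D : seq 'cV[F]_r,
    [/\ uniq D, {subset D <= R},
        (forall c : 'cV[F]_r -> F, \sum_(d <- D) c d *: d = 0 ->
            forall d, d \in D -> c d = 0),
        (forall a, a \in R -> exists k : 'cV[F]_r -> nat,
            a = \sum_(d <- D) (k d)%:R *: d \/ a = - \sum_(d <- D) (k d)%:R *: d)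
      & (forall a, a \in P <-> (a \in R /\ exists k : 'cV[F]_r -> nat,
            a = \sum_(d <- D) (k d)%:R *: d))].

Definition in_W (F : fieldType) (r : nat) (R : seq 'cV[F]_r)
    (cor : 'cV[F]_r -> 'cV[F]_r) (w : 'M[F]_r) : Prop :=
  exists s : seq 'cV[F]_r, {subset s <= R} /\
    w = foldr (fun a m => refl a (cor a) *m m) 1%:M s.

Definition rho (F : fieldType) (r : nat) (P : seq 'cV[F]_r) : 'cV[F]_r :=
  (2%:R)^-1 *: \sum_(a <- P) a.

Definition dot (F : fieldType) (r : nat) (P : seq 'cV[F]_r) (w : 'M[F]_r)
    (xi : 'cV[F]_r) : 'cV[F]_r :=
  w *m (xi + rho P) - rho P.

(* S = S(h) = polynomial functions on h^*; H in h as a linear polynomial *)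
Definition hpoly (F : fieldType) (r : nat) (h : 'cV[F]_r) : {mpoly F[r]} :=
  \sum_(i < r) h i 0 *: 'X_i.

(* (w.f)(xi) = f(w^{-1}.xi) *)
Definition dotp (F : fieldType) (r : nat) (P : seq 'cV[F]_r) (w : 'M[F]_r)
    (f : {mpoly F[r]}) : {mpoly F[r]} :=
  let wi := invmx w in
  let rh := rho P in
  comp_mpoly [tuple (\sum_(j < r) wi i j *: ('X_j + (rh j 0)%:MP)) - (rh i 0)%:MP
             | i < r] f.

Definition dot_set (F : fieldType) (r : nat) (P : seq 'cV[F]_r) (w : 'M[F]_r)
    (Om : {mpoly F[r]} -> Prop) : {mpoly F[r]} -> Prop :=
  fun g => exists f, Om f /\ g = dotp P w f.

Definition prime_ideal (T : comNzRingType) (I : T -> Prop) : Prop :=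
  [/\ I 0, (forall a b, I a -> I b -> I (a + b)),
      (forall a b, I b -> I (a * b)), ~ I 1
    & (forall a b, I (a * b) -> I a \/ I b)].

Definition Rlam (F : fieldType) (r : nat) (R : seq 'cV[F]_r)
    (cor : 'cV[F]_r -> 'cV[F]_r) (Om : {mpoly F[r]} -> Prop) (a : 'cV[F]_r) : Prop :=
  a \in R /\ exists n : int, Om (hpoly (cor a) - n%:~R).

Definition Rlam_pos (F : fieldType) (r : nat) (R P : seq 'cV[F]_r)
    (cor : 'cV[F]_r -> 'cV[F]_r) (Om : {mpoly F[r]} -> Prop) (a : 'cV[F]_r) : Prop :=
  Rlam R cor Om a /\ a \in P.

(* B_lambda: simple roots of R_lambda w.r.t. R_lambda^+ (indecomposable
   elements of R_lambda^+) *)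
Definition Blam (F : fieldType) (r : nat) (R P : seq 'cV[F]_r)
    (cor : 'cV[F]_r -> 'cV[F]_r) (Om : {mpoly F[r]} -> Prop) (a : 'cV[F]_r) : Prop :=
  Rlam_pos R P cor Om a /\
  ~ (exists b c, Rlam_pos R P cor Om b /\ Rlam_pos R P cor Om c /\ a = b + c).

Definition Wlam (F : fieldType) (r : nat) (R P : seq 'cV[F]_r)
    (cor : 'cV[F]_r -> 'cV[F]_r) (Om : {mpoly F[r]} -> Prop) (w : 'M[F]_r) : Prop :=
  in_W R cor w /\ (forall a, Blam R P cor Om a -> w *m a \in P).

(* Main.v *)
Require Import Defs.
From mathcomp Require Import all_boot all_algebra.
From mathcomp Require Import mpoly.
From mathcomp Require Import ring.
From Stdlib Require Import Classical.
From mathcomp Require Import zify.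
Set Implicit Arguments. Unset Strict Implicit. Unset Printing Implicit Defensive.
Import GRing.Theory.
Local Open Scope ring_scope.

Section Lin.
Variables (F : fieldType) (r : nat).
Local Notation V := 'cV[F]_r.

Lemma pairE (x h : V) : pair x h = (x^T *m h) 0 0.
Proof. rewrite /pair !mxE; apply: eq_bigr => i _; by rewrite mxE. Qed.

Lemma pairC (x h : V) : pair x h = pair h x.
Proof. rewrite /pair; apply: eq_bigr => i _; by rewrite mulrC. Qed.

Lemma pair_mul (M : 'M[F]_r) (x h : V) : pair (M *m x) h = pair x (M^T *m h).
Proof. by rewrite !pairE trmx_mul mulmxA. Qed.

Lemma pairDl (x y h : V) : pair (x + y) h = pair x h + pair y h.
Proof. by rewrite !pairE linearD /= mulmxDl mxE. Qed.

Lemma pairZl (k : F) (x h : V) : pair (k *: x) h = k * pair x h.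
Proof. by rewrite !pairE linearZ /= -scalemxAl mxE. Qed.

Lemma pairNl (x h : V) : pair (- x) h = - pair x h.
Proof. by rewrite -scaleN1r pairZl mulN1r. Qed.

Lemma pairBl (x y h : V) : pair (x - y) h = pair x h - pair y h.
Proof. by rewrite pairDl pairNl. Qed.

Lemma pair0l (h : V) : pair 0 h = 0.
Proof. by rewrite /pair big1 // => i _; rewrite mxE mul0r. Qed.

Lemma pair_suml I (s : seq I) (f : I -> V) h :
  pair (\sum_(i <- s) f i) h = \sum_(i <- s) pair (f i) h.
Proof.
elim: s => [|a s IH]; first by rewrite !big_nil pair0l.
by rewrite !big_cons pairDl IH.
Qed.

Lemma reflE (a c x : V) : refl a c *m x = x - pair x c *: a.
Proof.
rewrite /refl mulmxBl mul1mx -mulmxA [c^T *m x]mx11_scalar mul_mx_scalar.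
by rewrite -pairE pairC.
Qed.

End Lin.

Lemma natr_inj (F : fieldType) (hchar : [pchar F] =i pred0) (n m : nat) :
  n%:R = m%:R :> F -> n = m.
Proof.
move=> e; have hc := (pcharf0P F).1 hchar.
wlog le: n m e / (m <= n)%N.
  move=> W; case: (leqP m n) => h; first exact: W.
  by symmetry; apply: W => //; exact: ltnW.
have: ((n - m)%N%:R == 0 :> F) by rewrite natrB // e subrr.
rewrite hc subn_eq0 => h; apply/eqP; by rewrite eqn_leq le h.
Qed.

Section Weyl.
Variables (F : fieldType) (hchar : [pchar F] =i pred0) (r : nat).
Local Notation V := 'cV[F]_r.
Variables (R : seq V) (cor : V -> V) (hR : root_system R cor).

Definition wof (s : seq V) : 'M[F]_r := foldr (fun a m => refl a (cor a) *m m) 1%:M s.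

Lemma h2 a : a \in R -> pair a (cor a) = 2%:R.
Proof. by case: hR => _ H _ _ _; apply: H. Qed.

Lemma hrefl a b : a \in R -> b \in R -> refl a (cor a) *m b \in R.
Proof. by case: hR => _ _ H _ _; apply: H. Qed.

Lemma R0 : 0 \notin R.
Proof. by case: hR => [[_ H]] _ _ _ _. Qed.

Lemma refl_sq a : a \in R -> refl a (cor a) *m refl a (cor a) = 1%:M.
Proof.
move=> aR; rewrite /refl mulmxBl mul1mx mulmxBr mulmx1.
rewrite -mulmxA (mulmxA (cor a)^T) [(cor a)^T *m a]mx11_scalar -pairE pairC h2 //.
rewrite mul_scalar_mx -scalemxAr scaler_nat.
set X := a *m _.
have -> : X - X *+ 2 = - X by rewrite mulr2n opprD addrA subrr add0r.
by rewrite opprK subrK.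
Qed.


Lemma wof_cat s t : wof (s ++ t) = wof s *m wof t.
Proof. elim: s => [|a s IH] /=; first by rewrite mul1mx. by rewrite IH mulmxA. Qed.

Lemma wof_inv s : {subset s <= R} -> wof (rev s) *m wof s = 1%:M.
Proof.
elim: s => [|a s IH] sR /=; first by rewrite mulmx1.
have aR : a \in R by apply: sR; rewrite inE eqxx.
rewrite rev_cons -cats1 wof_cat /= mulmx1 mulmxA -(mulmxA (wof (rev s))) refl_sq //.
by rewrite mulmx1 IH // => x xs; apply: sR; rewrite inE xs orbT.
Qed.

Lemma inW_wof s : {subset s <= R} -> in_W R cor (wof s).
Proof. by move=> sR; exists s. Qed.

Lemma inW_mul w w' : in_W R cor w -> in_W R cor w' -> in_W R cor (w *m w').
Proof.
move=> [s [sR ->]] [t [tR ->]]; exists (s ++ t); split; last by move: (wof_cat s t); rewrite /wof => ->.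
by move=> x; rewrite mem_cat => /orP[/sR|/tR].
Qed.

Lemma inW_R w b : in_W R cor w -> b \in R -> w *m b \in R.
Proof.
move=> [s [sR ->]] bR; elim: s sR => [|a s IH] sR /=; first by rewrite mul1mx.
rewrite -mulmxA hrefl //; first by apply: sR; rewrite inE eqxx.
by apply: IH => x xs; apply: sR; rewrite inE xs orbT.
Qed.

Lemma inW_inv w : in_W R cor w ->
  [/\ in_W R cor (invmx w), invmx w *m w = 1%:M, w *m invmx w = 1%:M & w \in unitmx].
Proof.
move=> [s [sR ->]]; rewrite -/(wof s).
have e := wof_inv sR.
have e' := mulmx1C e.
have u : wof s \in unitmx by apply: (intro_unitmx (conj e e')).
have -> : invmx (wof s) = wof (rev s).
  by rewrite -[invmx _]mul1mx -e -mulmxA mulmxV // mulmx1.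
split => //; apply: inW_wof => x; rewrite mem_rev; exact: sR.
Qed.

Lemma pairBr (x h h' : V) : pair x (h - h') = pair x h - pair x h'.
Proof. by rewrite pairC pairBl !(pairC x). Qed.

Lemma pair_delta i (h : V) : pair (delta_mx i 0) h = h i 0.
Proof. by rewrite pairE trmx_delta -rowE mxE. Qed.

Lemma hspan (x : V) : exists c : V -> F, x = \sum_(a <- R) c a *: a.
Proof. by case: hR => _ _ _ _ H; apply: H. Qed.

Lemma vec_eq0 (h : V) : (forall b, b \in R -> pair b h = 0) -> h = 0.
Proof.
move=> H; apply/matrixP => i j; rewrite ord1 [RHS]mxE -pair_delta.
have [c ->] := hspan (delta_mx i 0).
rewrite pair_suml big1_seq // => b /andP[_ bR]; by rewrite pairZl H // mulr0.
Qed.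

Lemma cor_uniq a c : a \in R -> pair a c = 2%:R ->
  (forall b, b \in R -> refl a c *m b \in R) -> c = cor a.
Proof.
move=> aR pc hc.
set phi := c - cor a.
have pa : pair a phi = 0 by rewrite pairBr pc h2 // subrr.
pose u (x : V) : V := refl a (cor a) *m (refl a c *m x).
have ux x : u x = x + pair x phi *: a.
  rewrite /u !reflE pairBl pairZl h2 // pairBr.
  by apply/matrixP => i j; rewrite !mxE; ring.
have iR b n : b \in R -> iter n u b \in R.
  move=> bR; elim: n => [|n IH] //=; rewrite /u hrefl // hc //.
have iE b n : iter n u b = b + (n%:R * pair b phi) *: a.
  elim: n => [|n IH] /=; first by rewrite mul0r scale0r addr0.
  rewrite ux IH pairDl pairZl pa mulr0 addr0.
  by apply/matrixP => i j; rewrite !mxE -natr1; ring.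
have a0 : a != 0 by apply: contraNneq R0 => <-.
suff H : forall b, b \in R -> pair b phi = 0.
  by apply/eqP; rewrite -subr_eq0; apply/eqP; apply: vec_eq0.
move=> b bR; apply/eqP/negPn/negP => k0.
pose s := [seq iter n u b | n <- iota 0 (size R).+1].
have us : uniq s.
  rewrite map_inj_uniq ?iota_uniq // => n m.
  rewrite !iE => /addrI /eqP; rewrite -subr_eq0 -scalerBl scaler_eq0 (negPf a0) orbF.
  rewrite subr_eq0 => /eqP /(mulIf k0); exact: natr_inj.
have := uniq_leq_size us; rewrite size_map size_iota => H; suff: ((size R).+1 <= size R)%N by rewrite ltnn.
apply: H.
by move=> x /mapP[n _ ->]; apply: iR.
Qed.

Lemma cor_W w a : in_W R cor w -> a \in R -> cor (w *m a) = (invmx w)^T *m cor a.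
Proof.
move=> wW aR; have [iW e1 e2 _] := inW_inv wW.
symmetry; apply: cor_uniq; first exact: inW_R.
  by rewrite pairC pair_mul trmxK mulmxA e1 mul1mx pairC h2.
move=> b bR.
have -> : refl (w *m a) ((invmx w)^T *m cor a) *m b =
          w *m (refl a (cor a) *m (invmx w *m b)).
  rewrite !reflE mulmxBr mulmxA e2 mul1mx -scalemxAr.
  by rewrite [pair (invmx w *m b) _]pair_mul.
by apply: inW_R => //; apply: hrefl => //; apply: inW_R.
Qed.

Lemma negR a : a \in R -> - a \in R.
Proof.
move=> aR; have := hrefl aR aR; rewrite reflE h2 //.
by rewrite scaler_nat mulr2n opprD addrA subrr add0r.
Qed.

Lemma cor_neg a : a \in R -> cor (- a) = - cor a.
Proof.
move=> aR; symmetry; apply: cor_uniq; first exact: negR.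
  by rewrite pairNl pairC pairNl opprK pairC h2.
move=> b bR; have -> : refl (- a) (- cor a) = refl a (cor a).
  by rewrite /refl linearN /= mulmxN mulNmx opprK.
exact: hrefl.
Qed.

Lemma cor_int a b : a \in R -> b \in R -> exists n : int, pair b (cor a) = n%:~R.
Proof. by case: hR => _ _ _ [H _] _; apply: H. Qed.

Inductive ZR : V -> Prop :=
| ZR0 : ZR 0
| ZRD x y : ZR x -> ZR y -> ZR (x + y)
| ZRN x : ZR x -> ZR (- x)
| ZRr a : a \in R -> ZR a.

Lemma ZR_pair x b : ZR x -> b \in R -> exists n : int, pair x (cor b) = n%:~R.
Proof.
move=> zx bR; elim: x / zx => [|x1 y1 _ [n1 e1] _ [n2 e2]|x1 _ [n e]|a aR].
- by exists 0; rewrite pair0l.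
- by exists (n1 + n2); rewrite pairDl e1 e2 intrD.
- by exists (- n); rewrite pairNl e mulrNz.
- exact: cor_int.
Qed.

Lemma ZR_W w x : in_W R cor w -> ZR x -> ZR (w *m x).
Proof.
move=> wW; elim: x / => [|x1 y1 _ H1 _ H2|x1 _ H|a aR].
- by rewrite mulmx0; constructor.
- by rewrite mulmxDr; constructor.
- by rewrite mulmxN; constructor.
- by constructor; apply: inW_R.
Qed.

Lemma ZR_sum (I : eqType) (s : seq I) (f : I -> V) :
  (forall i, i \in s -> ZR (f i)) -> ZR (\sum_(i <- s) f i).
Proof.
elim: s => [|a s IH] H; first by rewrite big_nil; constructor.
rewrite big_cons; constructor; first by apply: H; rewrite inE eqxx.
by apply: IH => i iS; apply: H; rewrite inE iS orbT.
Qed.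

Variables (P D : seq V).
Hypotheses (hPu : uniq P) (hDR : {subset D <= R})
  (hind : forall c : V -> F, \sum_(d <- D) c d *: d = 0 -> forall d, d \in D -> c d = 0)
  (hdec : forall a, a \in R -> exists k : V -> nat,
            a = \sum_(d <- D) (k d)%:R *: d \/ a = - \sum_(d <- D) (k d)%:R *: d)
  (hPc : forall a, a \in P <-> (a \in R /\ exists k : V -> nat,
            a = \sum_(d <- D) (k d)%:R *: d)).

Definition natc (x : V) := exists k : V -> nat, x = \sum_(d <- D) (k d)%:R *: d.

Lemma natcD x y : natc x -> natc y -> natc (x + y).
Proof.
move=> [k ->] [k' ->]; exists (fun d => (k d + k' d)%N).
by rewrite -big_split /=; apply: eq_bigr => d _; rewrite natrD scalerDl.
Qed.

Lemma P_R a : a \in P -> a \in R.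
Proof. by move=> /hPc []. Qed.

Lemma PorN a : a \in R -> a \in P \/ - a \in P.
Proof.
move=> aR; have [k [e|e]] := hdec aR.
  by left; apply/hPc; split => //; exists k.
by right; apply/hPc; split; [exact: negR | exists k; rewrite e opprK].
Qed.

Lemma natc0 x : natc x -> natc (- x) -> x = 0.
Proof.
move=> [k ek] [k' ek'].
have H := hind (c := fun d => (k d + k' d)%:R).
have : \sum_(d <- D) (k d + k' d)%:R *: d = 0.
  rewrite (eq_bigr (fun d => (k d)%:R *: d + (k' d)%:R *: d)); last first.
    by move=> d _; rewrite natrD scalerDl.
  by rewrite big_split /= -ek -ek' subrr.
move/H => H'; rewrite ek big1_seq // => d /andP[_ dD].
have /eqP := H' d dD; rewrite ((pcharf0P F).1 hchar) addn_eq0 => /andP[/eqP -> _].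
by rewrite scale0r.
Qed.

Lemma notPN a : a \in P -> - a \in P -> False.
Proof.
move=> /hPc[aR na] /hPc[_ nna].
have a0 := natc0 na nna; by move: (R0); rewrite -a0 aR.
Qed.

Lemma rho_refl a : a \in R -> ZR (refl a (cor a) *m rho P - rho P).
Proof.
move=> aR; set s := refl a (cor a).
pose sg p := if s *m p \in P then s *m p else - (s *m p).
have sgP p : p \in P -> sg p \in P.
  move=> pP; rewrite /sg; case: ifP => // h.
  by case: (PorN (hrefl aR (P_R pP))) => //; rewrite h.
have sinj p q : s *m p = s *m q -> p = q.
  by move=> e; rewrite -[p]mul1mx -[q]mul1mx -(refl_sq aR) -!mulmxA e.
have sgi : {in P &, injective sg}.
  move=> p q pP qP; rewrite /sg.
  case: ifP => h1; case: ifP => h2.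
  - exact: sinj.
  - move=> e; have e' : p = - q by apply: sinj; rewrite mulmxN.
    by case: (notPN qP); rewrite -e'.
  - move=> e; have e' : p = - q by apply: sinj; rewrite mulmxN -e opprK.
    by case: (notPN qP); rewrite -e'.
  - by move/oppr_inj; exact: sinj.
have pe : perm_eq [seq sg p | p <- P] P.
  apply: uniq_perm => //; first by rewrite map_inj_in_uniq.
  apply: (uniq_min_size _ _ _).2; first by rewrite map_inj_in_uniq.
    by move=> x /mapP[p pP ->]; apply: sgP.
  by rewrite size_map.
have Hsum : \sum_(p <- P) sg p = \sum_(p <- P) p.

  by rewrite -[RHS](perm_big P pe) big_map.
set N := \sum_(p <- P | s *m p \notin P) sg p.
have e : s *m \sum_(p <- P) p = \sum_(p <- P) p - N *+ 2.
  rewrite mulmx_sumr -Hsum (bigID (fun p => s *m p \in P)) /=.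
  rewrite [X in _ = X - _](bigID (fun p => s *m p \in P)) /=.
  rewrite [X in _ + X](eq_bigr (fun p => - sg p)); last first.
    by move=> p /negPf h; rewrite /sg h opprK.
  rewrite [X in X + _ = _](eq_bigr sg); last by move=> p h; rewrite /sg h.
  by rewrite sumrN -/N mulr2n opprD addrA addrK.
have -> : s *m rho P - rho P = - N.
  rewrite /rho -scalemxAr e scalerBr addrAC subrr add0r.
  rewrite -scaler_nat scalerA mulVf ?scale1r //.
  by rewrite ((pcharf0P F).1 hchar).
apply: ZRN; rewrite /N -big_filter; apply: ZR_sum => p.
rewrite mem_filter => /andP[_ pP]; apply: ZRr; exact: (P_R (sgP p pP)).
Qed.

Lemma inW_refl a : a \in R -> in_W R cor (refl a (cor a)).
Proof. by move=> aR; exists [:: a]; split; [move=> x; rewrite inE => /eqP ->| rewrite /= mulmx1]. Qed.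

Lemma rho_W w : in_W R cor w -> ZR (w *m rho P - rho P).
Proof.
move=> [s [sR ->]]; elim: s sR => [|a s IH] sR /=.
  by rewrite mul1mx subrr; constructor.
have aR : a \in R by apply: sR; rewrite inE eqxx.
have -> : refl a (cor a) *m foldr (fun a0 m => refl a0 (cor a0) *m m) 1%:M s *m rho P - rho P
  = refl a (cor a) *m (foldr (fun a0 m => refl a0 (cor a0) *m m) 1%:M s *m rho P - rho P)
    + (refl a (cor a) *m rho P - rho P).
  by rewrite mulmxBr -mulmxA addrA subrK.
constructor; last exact: rho_refl.
apply: ZR_W; first exact: inW_refl.
by apply: IH => x xs; apply: sR; rewrite inE xs orbT.
Qed.

End Weyl.

Section Poly.
Variables (F : fieldType) (r : nat).
Local Notation V := 'cV[F]_r.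
Local Notation MP := {mpoly F[r]}.

Lemma hpolyD (x y : V) : hpoly (x + y) = hpoly x + hpoly y.
Proof. by rewrite /hpoly -big_split; apply: eq_bigr => i _; rewrite mxE scalerDl. Qed.

Lemma hpolyZ k (x : V) : hpoly (k *: x) = k *: hpoly x.
Proof. by rewrite /hpoly scaler_sumr; apply: eq_bigr => i _; rewrite mxE scalerA. Qed.

Lemma hpoly0 : hpoly (0 : V) = 0.
Proof. by rewrite /hpoly big1 // => i _; rewrite mxE scale0r. Qed.

Lemma hpolyN (x : V) : hpoly (- x) = - hpoly x.
Proof. by rewrite -scaleN1r hpolyZ scaleN1r. Qed.

Lemma hpoly_sum I (s : seq I) (f : I -> V) : hpoly (\sum_(i <- s) f i) = \sum_(i <- s) hpoly (f i).
Proof.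
elim: s => [|a s IH]; first by rewrite !big_nil hpoly0.
by rewrite !big_cons hpolyD IH.
Qed.

Lemma hpoly_delta i : hpoly (delta_mx i 0 : V) = 'X_i.
Proof.
rewrite /hpoly (bigD1 i) //= big1 ?addr0; first by rewrite mxE !eqxx scale1r.
by move=> j /negPf h; rewrite mxE h scale0r.
Qed.

Lemma vec_delta (h : V) : h = \sum_(i < r) h i 0 *: delta_mx i 0.
Proof.
rewrite {1}[h]matrix_sum_delta; apply: eq_bigr => i _.
by rewrite big_ord1.
Qed.

Definition aff (M : 'M[F]_r) (c : V) : r.-tuple MP :=
  [tuple hpoly (M^T *m delta_mx i 0) + (c i 0)%:MP | i < r].

Lemma comp_hpoly M c (h : V) :
  comp_mpoly (aff M c) (hpoly h) = hpoly (M^T *m h) + (pair c h)%:MP.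
Proof.
rewrite {1}/hpoly raddf_sum /=.
rewrite (eq_bigr (fun i => h i 0 *: hpoly (M^T *m delta_mx i 0) + (c i 0 * h i 0)%:MP)); last first.
  move=> i _; rewrite comp_mpolyZ comp_mpolyXU -tnth_nth tnth_mktuple scalerDr.
  by congr (_ + _); rewrite -mul_mpolyC -mpolyCM mulrC.
rewrite big_split /=; congr (_ + _).
  rewrite {2}[h]vec_delta mulmx_sumr hpoly_sum; apply: eq_bigr => i _.
  by rewrite -scalemxAr hpolyZ.
by rewrite /pair -raddf_sum.
Qed.

Lemma comp_const (t : r.-tuple MP) k : comp_mpoly t (k%:MP) = k%:MP.
Proof. exact: comp_mpolyC. Qed.

Lemma compA (t1 t2 : r.-tuple MP) (p : MP) :
  comp_mpoly t1 (comp_mpoly t2 p) = comp_mpoly [tuple comp_mpoly t1 (tnth t2 i) | i < r] p.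
Proof.
rewrite (comp_mpolyEX p t2) [RHS]comp_mpolyEX raddf_sum /=.
apply: eq_bigr => m _; rewrite comp_mpolyZ; congr (_ *: _).
rewrite !comp_mpolyX rmorph_prod; apply: eq_bigr => i _; by rewrite rmorphXn tnth_mktuple.
Qed.

Variable (P : seq V).

Lemma dotp_aff w f : dotp P w f = comp_mpoly (aff (invmx w) (invmx w *m rho P - rho P)) f.
Proof.
rewrite /dotp; congr comp_mpoly; apply: eq_from_tnth => i; rewrite !tnth_mktuple.
rewrite -colE; set wi := invmx w.
rewrite [X in _ = X + _](_ : _ = \sum_(j < r) wi i j *: 'X_j); last first.
  by rewrite /hpoly; apply: eq_bigr => j _; rewrite !mxE.
rewrite (eq_bigr (fun j => wi i j *: 'X_j + (wi i j * rho P j 0)%:MP)); last first.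
  by move=> j _; rewrite scalerDr; congr (_ + _); rewrite -mul_mpolyC -mpolyCM.
rewrite big_split /= -addrA; congr (_ + _).
by rewrite !mxE -raddf_sum mpolyCB.
Qed.

Lemma dotp_hpoly w (h : V) k :
  dotp P w (hpoly h + k%:MP) =
  hpoly ((invmx w)^T *m h) + (pair (invmx w *m rho P - rho P) h + k)%:MP.
Proof. by rewrite dotp_aff raddfD /= comp_hpoly comp_mpolyC mpolyCD addrA. Qed.

Lemma dotpK w f : w \in unitmx -> dotp P (invmx w) (dotp P w f) = f.
Proof.
move=> wu; rewrite !dotp_aff compA invmxK.
rewrite -[RHS](comp_mpoly_id f); congr comp_mpoly; apply: eq_from_tnth => i.
rewrite !tnth_mktuple raddfD /= comp_hpoly comp_mpolyC mulmxA -trmx_mul.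
rewrite mulVmx // trmx1 mul1mx hpoly_delta -addrA -mpolyCD.
rewrite pairC pair_mul trmxK pair_delta mulmxBr mulmxA mulVmx // mul1mx.
by rewrite !mxE addrA subrK subrr mpolyC0 addr0.
Qed.

Lemma dotp_inj w f g : w \in unitmx -> dotp P w f = dotp P w g -> f = g.
Proof. by move=> wu e; rewrite -(dotpK f wu) e dotpK. Qed.

End Poly.

Section Main.
Variables (F : fieldType) (hchar : [pchar F] =i pred0) (r : nat).
Local Notation V := 'cV[F]_r.
Local Notation MP := {mpoly F[r]}.
Variables (R : seq V) (cor : V -> V) (hR : root_system R cor).
Variables (P D : seq V).
Hypotheses (hPu : uniq P) (hDR : {subset D <= R})
  (hind : forall c : V -> F, \sum_(d <- D) c d *: d = 0 -> forall d, d \in D -> c d = 0)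
  (hdec : forall a, a \in R -> exists k : V -> nat,
            a = \sum_(d <- D) (k d)%:R *: d \/ a = - \sum_(d <- D) (k d)%:R *: d)
  (hPc : forall a, a \in P <-> (a \in R /\ exists k : V -> nat,
            a = \sum_(d <- D) (k d)%:R *: d)).
Variables (Om Om1 : MP -> Prop) (pOm : prime_ideal Om) (pOm1 : prime_ideal Om1).
Variable (v : 'M[F]_r).
Hypotheses (hOm1 : forall f, Om1 f <-> dot_set P v Om f) (hv : Wlam R P cor Om v).

Lemma vW : in_W R cor v. Proof. by case: hv. Qed.

Lemma intC (n : int) : (n%:~R : MP) = (n%:~R : F)%:MP.
Proof. by rewrite rmorph_int. Qed.

Lemma dotp_cor a : a \in R -> exists m : int, forall k,
  dotp P v (hpoly (cor a) + k%:MP) = hpoly (cor (v *m a)) + (m%:~R + k)%:MP.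
Proof.
move=> aR; have [ivW _ _ _] := inW_inv hR vW.
have [m em] := ZR_pair hR (rho_W hchar hR hPu hind hdec hPc ivW) aR.
by exists m => k; rewrite dotp_hpoly (cor_W hchar hR vW aR) em.
Qed.

Lemma RL_corr b : Rlam R cor Om1 b <-> exists a, Rlam R cor Om a /\ b = v *m a.
Proof.
have [ivW e1 e2 vu] := inW_inv hR vW.
split.
- move=> [bR [n hn]].
  have /hOm1 [g [Og eg]] := hn.
  set a := invmx v *m b.
  have aR : a \in R by exact: (inW_R hR ivW bR).
  have va : v *m a = b by rewrite /a mulmxA e2 mul1mx.
  have [m em] := dotp_cor aR.
  have eg' : g = hpoly (cor a) + (- (m%:~R + n%:~R))%:MP.
    apply: (@dotp_inj _ _ P _ _ _ vu); rewrite em -eg va.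
    by rewrite opprD addrA subrr add0r mpolyCN intC.
  exists a; split => //; split => //; exists (m + n).
  by rewrite intC intrD -mpolyCN -eg'.
- move=> [a [[aR [n hn]] ->]]; split; first exact: (inW_R hR vW aR).
  have [m em] := dotp_cor aR.
  exists (n - m); apply/hOm1; exists (hpoly (cor a) - n%:~R); split => //.
  rewrite [in dotp _ _ _]intC -mpolyCN em.
  by rewrite intC intrB -mpolyCN opprB addrC.
Qed.

Lemma Om_neg x : Om x -> Om (- x).
Proof. by case: pOm => _ _ Hm _ _ h; rewrite -mulN1r; apply: Hm. Qed.

Lemma RL_neg a : Rlam R cor Om a -> Rlam R cor Om (- a).
Proof.
move=> [aR [n hn]]; split; first exact: (negR hR aR).
exists (- n); rewrite (cor_neg hchar hR aR) hpolyN intC mulrNz mpolyCN -opprD -intC.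
exact: Om_neg.
Qed.

Lemma vinj (x y : V) : v *m x = v *m y -> x = y.
Proof.
have [_ e1 _ _] := inW_inv hR vW.
by move=> e; rewrite -[x]mul1mx -[y]mul1mx -e1 -!mulmxA e.
Qed.

Lemma coef_eq (k k' : V -> nat) :
  \sum_(d <- D) (k d)%:R *: d = \sum_(d <- D) (k' d)%:R *: d ->
  forall d, d \in D -> k d = k' d.
Proof.
move=> e d dD; apply: (natr_inj hchar); apply/eqP; rewrite -subr_eq0; apply/eqP.
apply: (hind (c := fun d => (k d)%:R - (k' d)%:R)) => //.
rewrite (eq_bigr (fun d => (k d)%:R *: d - (k' d)%:R *: d)); last by move=> x _; rewrite scalerBl.
by rewrite sumrB e subrr.
Qed.

Lemma ht_pos (k : V -> nat) : \sum_(d <- D) (k d)%:R *: d \in R ->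
  (0 < \sum_(d <- D) k d)%N.
Proof.
move=> H; rewrite lt0n; apply/negP => /eqP h.
have h' : forall d, d \in D -> k d = 0%N.
  move=> d dD; move: h; rewrite (big_rem d) //= => /eqP; rewrite addn_eq0 => /andP[/eqP -> _].
  by [].
move: H; rewrite big1_seq ?(negPf (R0 hR)) // => d /andP[_ dD].
by rewrite h' // scale0r.
Qed.

Lemma vnatc n : forall a (k : V -> nat), Rlam_pos R P cor Om a ->
  a = \sum_(d <- D) (k d)%:R *: d -> (\sum_(d <- D) k d <= n)%N -> natc D (v *m a).
Proof.
elim: n => [|n IH] a k Ha ek hn.
  have aR : a \in R by case: Ha => [[]].
  by move: (ht_pos (k := k)); rewrite -ek => /(_ aR); rewrite leqn0 in hn; rewrite (eqP hn).
case: (classic (Blam R P cor Om a)) => Hb.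
  by case: hv => _ /(_ a Hb) /hPc [_].
have [b [c [Hb1 [Hc1 eabc]]]] : exists b c, Rlam_pos R P cor Om b /\ Rlam_pos R P cor Om c /\ a = b + c.
  by apply: NNPP => H; apply: Hb; split.
have [bR [kb ekb]] := (hPc b).1 Hb1.2.
have [cR [kc ekc]] := (hPc c).1 Hc1.2.
have ek' : a = \sum_(d <- D) (kb d + kc d)%:R *: d.
  rewrite eabc ekb ekc -big_split /=; apply: eq_bigr => d _; by rewrite natrD scalerDl.
have hk : \sum_(d <- D) k d = (\sum_(d <- D) kb d + \sum_(d <- D) kc d)%N.
  rewrite -big_split /=; apply: eq_big_seq => d dD.
  by apply: (coef_eq (k' := fun d => (kb d + kc d)%N)) => //; rewrite -ek -ek'.
have pb := ht_pos (k := kb); rewrite -ekb in pb; have {pb} pb := pb bR.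
have pc := ht_pos (k := kc); rewrite -ekc in pc; have {pc} pc := pc cR.
rewrite eabc mulmxDr; apply: natcD.
  apply: (IH b kb) => //; rewrite hk in hn; lia.
apply: (IH c kc) => //; rewrite hk in hn; lia.
Qed.

Lemma vpos a : Rlam_pos R P cor Om a -> v *m a \in P.
Proof.
move=> Ha; have [[aR _] aP] := Ha.
have [_ [k ek]] := (hPc a).1 aP.
apply/hPc; split; first exact: (inW_R hR vW aR).
exact: (vnatc (n := \sum_(d <- D) k d) Ha ek).
Qed.

Lemma RP_corr b : Rlam_pos R P cor Om1 b <-> exists a, Rlam_pos R P cor Om a /\ b = v *m a.
Proof.
split.
- move=> [/RL_corr [a [Ha eb]] bP]; exists a; split => //; split => //.
  have aR : a \in R by case: Ha.
  case: (PorN hR hdec hPc aR) => // naP.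
  have : v *m (- a) \in P by apply: vpos; split => //; apply: RL_neg.
  rewrite mulmxN -eb => nbP; by case: (notPN hchar hR hind hPc bP nbP).
- move=> [a [Ha ->]]; split; last exact: vpos.
  by apply/RL_corr; exists a; split => //; case: Ha.
Qed.

Lemma B_corr b : Blam R P cor Om1 b <-> exists a, Blam R P cor Om a /\ b = v *m a.
Proof.
split.
- move=> [/RP_corr [a [Ha eb]] Hn]; exists a; split => //; split => //.
  move=> [a1 [a2 [H1 [H2 e]]]]; apply: Hn; exists (v *m a1), (v *m a2).
  split; first by apply/RP_corr; exists a1.
  split; first by apply/RP_corr; exists a2.
  by rewrite eb e mulmxDr.
- move=> [a [[Ha Hn] ->]]; split; first by apply/RP_corr; exists a.
  move=> [b1 [b2 [/RP_corr [a1 [H1 ->]] [/RP_corr [a2 [H2 ->]] e]]]].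
  apply: Hn; exists a1, a2; split => //; split => //.
  by apply: vinj; rewrite mulmxDr.
Qed.

Lemma part2 u : Wlam R P cor Om1 u -> Wlam R P cor Om (u *m v).
Proof.
move=> [uW hu]; split; first exact: (inW_mul uW vW).
move=> a Ha; rewrite -mulmxA; apply: hu; apply/B_corr; by exists a.
Qed.

End Main.

Unset Implicit Arguments.
Set Strict Implicit.

Theorem mainTheorem18 (F : closedFieldType) (hchar : [pchar F] =i pred0)
    (r : nat) (R P : seq 'cV[F]_r) (cor : 'cV[F]_r -> 'cV[F]_r)
    (hR : root_system R cor) (hP : positive_system R P)
    (Om Om1 : {mpoly F[r]} -> Prop)
    (pOm : prime_ideal Om) (pOm1 : prime_ideal Om1) (v : 'M[F]_r) :
  (forall f, Om1 f <-> dot_set P v Om f) -> Wlam R P cor Om v ->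
  (forall b, Blam R P cor Om1 b <-> exists a, Blam R P cor Om a /\ b = v *m a) /\
  (forall u : 'M[F]_r, Wlam R P cor Om1 u -> Wlam R P cor Om (u *m v)).
Proof.
move=> hOm1 hv.
case: hP => hPu [D [_ hDR hind hdec hPc]].
split.
- exact: (B_corr hchar hR hPu hind hdec hPc pOm hOm1 hv).
- exact: (part2 hchar hR hPu hind hdec hPc pOm hOm1 hv).
Qed.
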